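(* For every integer $n \geq 1$, $D_n = Der_n + (-1)^{n-1}$. Equivalently, $D_n = n!\sum_{k=0}^{n-1}\frac{(-1)^k}{k!}$.
   Context: A linear arrangement of $\{1,\ldots,n\}$ is a sequence $a_1\cdots a_n$ in which each of $1,\ldots,n$ appears exactly once. It contains the pattern $ij$ if $a_t=i$ and $a_{t+1}=j$ for some $t$; otherwise it avoids it. $D_n$ is the number of linear arrangements of $\{1,\ldots,n\}$ avoiding all of the patterns $12, 23, \ldots, (n-1)n, n1$. $Der_n = n!\sum_{k=0}^n \frac{(-1)^k}{k!}$ is the $n$-th derangement number, the number of permutations of $\{1,\ldots,n\}$ with no fixed point. *)

(* Defs.v *)
From mathcomp Require Import all_boot all_order all_algebra all_fingroup.
Set Implicit Arguments. Unset Strict Implicit. Unset Printing Implicit Defensive.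
Import GRing.Theory Num.Theory.
Local Open Scope ring_scope.

(* A linear arrangement a_1 ... a_n of {1..n} is encoded as a permutation
   s : 'S_n of 'I_n, position t (0-based) holding value (s t).+1.
   Values are shifted down by one: value i in {1..n} is encoded as i-1.
   Pattern ij (i,j in {1..n}) occurs iff a_t = i and a_{t+1} = j for some t. *)

Definition contains_pattern (n : nat) (s : 'S_n) (i j : nat) : bool :=
  [exists t : 'I_n, exists t' : 'I_n,
     [&& (t'.+1 == t.+1.+1)%N, ((s t).+1 == i)%N & ((s t').+1 == j)%N]].

Definition avoids_all (n : nat) (s : 'S_n) : bool :=
  [forall i : 'I_n,
     ~~ contains_pattern s i.+1 (if (i.+1 < n)%N then i.+2 else 1%N)].

Definition D (n : nat) : nat := #|[set s : 'S_n | avoids_all s]|.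

Definition Der (n : nat) : rat :=
  (n`!)%:R * \sum_(k < n.+1) (-1) ^+ k / (k`!)%:R.

(* Main.v *)
Require Import Defs.
From mathcomp Require Import all_boot all_order all_algebra all_fingroup.
From mathcomp Require Import ring.
Import GRing.Theory Num.Theory.
Set Implicit Arguments. Unset Strict Implicit. Unset Printing Implicit Defensive.

Section Lists.
Variable T : eqType.
Implicit Types (s : seq T) (a b x y : T).

Fixpoint adj s x y : bool :=
  match s with
  | x1 :: ((x2 :: _) as s1) => ((x1 == x) && (x2 == y)) || adj s1 x y
  | _ => false
  end.

Lemma adj_cons x1 s x y :
  adj (x1 :: s) x y = ((x1 == x) && (ohead s == Some y)) || adj s x y.
Proof. by case: s => [|x2 s] /=; rewrite ?andbF. Qed.
Arguments adj : simpl never.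
Lemma adj_nil x y : adj [::] x y = false. Proof. by []. Qed.
Lemma adj1 x1 x y : adj [:: x1] x y = false. Proof. by []. Qed.

Lemma adj_memr s x y : adj s x y -> y \in behead s.
Proof.
elim: s => // x1 s IH; rewrite adj_cons => /orP[/andP[_]|/IH].
  by case: s {IH} => //= x2 s' /eqP[->]; rewrite inE eqxx.
by case: s {IH} => //= x2 s'; rewrite inE orbC => ->.
Qed.

Lemma adj_meml s x y : adj s x y -> x \in s.
Proof.
elim: s => // x1 s IH; rewrite adj_cons inE => /orP[/andP[/eqP-> _]|/IH->].
  by rewrite eqxx.
by rewrite orbT.
Qed.

Fixpoint ins a b s :=
  match s with
  | [::] => [::]
  | x :: s1 => if x == a then x :: b :: ins a b s1 else x :: ins a b s1
  end.

Lemma ins_notin a b s : a \notin s -> ins a b s = s.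
Proof.
elim: s => //= x s IH; rewrite inE negb_or eq_sym => /andP[/negbTE-> /IH->].
done.
Qed.

Lemma rem_adj a b s : uniq s -> adj s a b -> a != b ->
  [/\ forall x y, x != a -> x != b -> y != b -> adj (rem b s) x y = adj s x y,
      forall y, adj (rem b s) a y = adj s b y
    & ins a b (rem b s) = s].
Proof.
elim: s => // x1 s IH; rewrite cons_uniq => /andP[x1s us] Hadj ab.
have bs : b \in s by have := adj_memr Hadj.
have x1b : x1 != b by apply: contraNneq x1s => ->.
have -> : rem b (x1 :: s) = x1 :: rem b s by rewrite /= (negbTE x1b).
have [x1a|x1a] := eqVneq x1 a.
  subst x1.
  move: Hadj; rewrite adj_cons eqxx /=.
  case: s bs x1s us IH => // x2 s2 bs x1s us IH.
  rewrite [ohead _]/= => /orP[/eqP[x2b]|/adj_meml]; last by rewrite (negbTE x1s).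
  subst x2; have -> : rem b (b :: s2) = s2 by rewrite /= eqxx.
  move: x1s us; rewrite inE negb_or => /andP[_ as2] /andP[bs2 _].
  split.
  - move=> x y xa xb yb; rewrite !adj_cons ![_ == x]eq_sym (negbTE xa) (negbTE xb).
    by [].
  - move=> y; rewrite !adj_cons eqxx /= eqxx /=.
    have -> : adj s2 a y = false by apply/negP => /adj_meml; rewrite (negbTE as2).
    have -> : adj s2 b y = false by apply/negP => /adj_meml; rewrite (negbTE bs2).
    by rewrite (negbTE ab).
  - by rewrite ins_notin // eqxx.
move: Hadj; rewrite adj_cons (negbTE x1a) /= => Hs.
have [H1 H2 H3] := IH us Hs ab.
case: s bs x1s us IH Hs H1 H2 H3 => // x2 s2 bs x1s us IH Hs H1 H2 H3.
have x2b : x2 != b.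
  apply/eqP=> x2b; subst x2.
  move: us => /= /andP[bs2 _].
  move: Hs; rewrite adj_cons eq_sym (negbTE ab) /= => /adj_memr.
  by move/mem_behead; rewrite (negbTE bs2).
split.
- move=> x y xa xb yb; rewrite adj_cons H1 // [in RHS]adj_cons.
  congr (_ || _); rewrite /= eq_sym (negbTE x2b) /=.
  by [].
- move=> y; rewrite adj_cons (negbTE x1a) /= H2.
  by rewrite [in RHS]adj_cons (negbTE x1b).
- by rewrite /= (negbTE x1a) H3.
Qed.

Lemma ins_props a b s : uniq s -> a \in s -> b \notin s ->
  [/\ rem b (ins a b s) = s, adj (ins a b s) a b & perm_eq (ins a b s) (b :: s)].
Proof.
elim: s => // x s IH /= /andP[xs us]; rewrite !inE negb_or => ains /andP[bx bs].
have [xa|xa] := eqVneq x a.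
  subst x; rewrite ins_notin //= eq_sym (negbTE bx) eqxx.
  split => //.
  - by rewrite adj_cons eqxx /= eqxx.
  - by apply/seq.permP => p /=; rewrite addnCA.
move: ains; rewrite [a == x]eq_sym (negbTE xa) /= => ains.
have [H1 H2 H3] := IH us ains bs.
rewrite /= eq_sym (negbTE bx) H1; split => //.
- by rewrite adj_cons H2 orbT.
- apply: (@perm_trans _ (x :: b :: s)); first by rewrite perm_cons.
  by apply/seq.permP => p /=; rewrite addnCA.
Qed.


Lemma next_at_indep x y0 y y2 p : x != y -> x != y2 ->
  next_at x y0 y p = next_at x y0 y2 p.
Proof. by case: p => [|z p] /= /negbTE-> /negbTE->. Qed.

Lemma next_contract a b rest x : uniq [:: a, b & rest] -> x \in a :: rest ->
  next (a :: rest) x = if x == a then next [:: a, b & rest] b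
                       else next [:: a, b & rest] x.
Proof.
move=> /= /andP[]; rewrite inE negb_or => /andP[ab arest] /andP[brest _].
rewrite /next /=.
have [xa|xa] := eqVneq x a.
  subst x => _; rewrite eq_sym (negbTE ab).
  by case: rest {arest brest} => [|z p] /=; rewrite !eqxx.
rewrite inE (negbTE xa) /= => xr.
have xb : x != b by apply: contraNneq brest => <-.
exact: next_at_indep.
Qed.

Lemma all_cons' (p : pred T) x s : all p (x :: s) = p x && all p s.
Proof. by []. Qed.

#[local] Arguments next : simpl never.
Definition good (c X s : seq T) := all (fun x => adj s x (next c x)) X.

Lemma step a b rest X' : uniq [:: a, b & rest] -> uniq (a :: X') ->
  {subset a :: X' <= [:: a, b & rest]} ->
  count (good [:: a, b & rest] (a :: X')) (permutations [:: a, b & rest]) =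
  count (good (a :: rest) (map (fun x => if x == b then a else x) X'))
        (permutations (a :: rest)).
Proof.
set c := [:: a, b & rest]; set c' := a :: rest.
set f := fun x => if x == b then a else x.
move=> uc uX sX.
have ab : a != b by move: uc => /= /andP[]; rewrite inE negb_or => /andP[].
have nb : next c a = b by rewrite /c /next /= eqxx.
have key : forall s, uniq s -> adj s a b ->
    good c (a :: X') s = good c' (map f X') (rem b s).
  move=> s us sab; have [H1 H2 _] := rem_adj us sab ab.
  rewrite /good all_cons' nb sab /= all_map; apply: eq_in_all => x xX /=.
  have anX : a \notin X' by move: uX => /andP[].
  have xa : x != a by apply: contraNneq anX => <-.
  have xc : x \in c by apply: sX; rewrite inE xX orbT.
  rewrite /f; have [xb|xb] := eqVneq x b.
    subst x; rewrite /c' (@next_contract a b) // ?inE ?eqxx // H2 //.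
  rewrite /c' (@next_contract a b) //; last first.
    by move: xc; rewrite /c !inE (negbTE xb).
  rewrite (negbTE xa) H1 //.
  apply/eqP => e; have : next c x = next c a by rewrite e nb.
  by move/(can_inj (prev_next uc))/eqP; rewrite (negbTE xa).
rewrite -!size_filter.
set F := filter (good c (a :: X')) (permutations c).
have Fprop : forall s, s \in F -> [/\ perm_eq s c, uniq s & adj s a b].
  move=> s; rewrite mem_filter mem_permutations => /andP[gs ps].
  split => //; first by rewrite (perm_uniq ps).
  by move: gs; rewrite /good all_cons' nb => /andP[].
have -> : size F = size (map (rem b) F) by rewrite size_map.
apply: perm_size; apply: uniq_perm.
- rewrite map_inj_in_uniq ?filter_uniq ?permutations_uniq //.
  move=> s1 s2 /Fprop[_ u1 a1] /Fprop[_ u2 a2] e.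
  have [_ _ <-] := rem_adj u1 a1 ab; have [_ _ <-] := rem_adj u2 a2 ab.
  by rewrite e.
- by rewrite filter_uniq ?permutations_uniq.
move=> s'; apply/mapP/idP.
  case=> s sF ->; have [pc us sab] := Fprop s sF.
  move: sF; rewrite !mem_filter mem_permutations => /andP[gs _].
  rewrite -key // gs /=.
  rewrite mem_permutations -(perm_cons b).
  have bs : b \in s by rewrite (perm_mem pc) /c !inE eqxx orbT.
  rewrite -(permPl (perm_to_rem bs)) (permPl pc).
  by apply/seq.permP => p /=; rewrite addnCA.
rewrite mem_filter mem_permutations => /andP[gs' ps'].
have [anbr [bnr ur]] : a \notin b :: rest /\ b \notin rest /\ uniq rest.
  by move: uc => /= /andP[-> /andP[-> ->]].
have uc' : uniq c'.
  by rewrite /c' /= ur andbT; move: anbr; rewrite inE negb_or => /andP[].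
have us' : uniq s' by rewrite (perm_uniq ps').
have as' : a \in s' by rewrite (perm_mem ps') /c' inE eqxx.
have bs' : b \notin s' by rewrite (perm_mem ps') /c' inE negb_or eq_sym ab.
have [R A P] := ins_props us' as' bs'.
have ui : uniq (ins a b s') by rewrite (perm_uniq P) /= bs'.
exists (ins a b s'); last by rewrite R.
rewrite mem_filter mem_permutations key // R gs' /=.
rewrite (permPl P).
apply: (@perm_trans _ (b :: c')); first by rewrite perm_cons.
by apply/seq.permP => p /=; rewrite addnCA.
Qed.


Lemma core k : forall c X, size X = k -> uniq c -> uniq X -> {subset X <= c} ->
  size X < size c -> count (good c X) (permutations c) = (size c - size X)`!.
Proof.
elim: k => [|k IH] c X.
  move/size0nil => -> uc _ _ _; rewrite subn0 -size_permutations //.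
case: X => // a X' [sz] uc uX sX szc.
have ac : a \in c by apply: sX; rewrite inE eqxx.
have := rot_index ac; set i := index a c; set tl := (_ ++ _) => erot.
have pr : perm_eq (rot i c) c by rewrite perm_rot.
have e1 : count (good c (a :: X')) (permutations c) =
          count (good (rot i c) (a :: X')) (permutations (rot i c)).
  rewrite (seq.permP (perm_permutations pr)).
  by apply: eq_count => s; rewrite /good; apply: eq_all => x; rewrite next_rot.
have szr : size (rot i c) = size c by rewrite size_rot.
case: tl erot => [|b rest] erot.
  by move: szc szr; rewrite erot /= => h e; move: h; rewrite -e.
rewrite e1 -szr erot.
have ucr : uniq [:: a, b & rest] by rewrite -erot rot_uniq.
have sXr : {subset a :: X' <= [:: a, b & rest]}.
  by move=> x /sX; rewrite -erot mem_rot.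
rewrite step //.
move: uX => /andP[aX' uX'].
set f := fun x => if x == b then a else x.
have [anbr [bnr ur]] : a \notin b :: rest /\ b \notin rest /\ uniq rest.
  by move: ucr => /= /andP[-> /andP[-> ->]].
rewrite IH //.
- by rewrite /= size_map subSS.
- by rewrite size_map.
- by rewrite /= ur andbT; move: anbr; rewrite inE negb_or => /andP[].
- rewrite map_inj_in_uniq // => x y xX yX; rewrite /f.
  have xa : x != a by apply: contraNneq aX' => <-.
  have ya : y != a by apply: contraNneq aX' => <-.
  case: eqP => [xb|xb]; case: eqP => [yb|yb] // => e;
    by [rewrite xb yb | move: ya; rewrite -e eqxx | move: xa; rewrite e eqxx].
- move=> z /mapP[x xX ->]; rewrite /f; case: eqP => [_|xb]; first by rewrite inE eqxx.
  have := sXr x; rewrite !inE xX orbT => /(_ isT).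
  by move/eqP: xb => /negbTE->.
- rewrite size_map /=; move: szc; rewrite -szr erot /= !ltnS.
  by [].
Qed.

End Lists.

Definition nxt (n x : nat) : nat := if x.+1 < n then x.+1 else 0.

Lemma next_iota n x : x < n -> next (iota 0 n) x = nxt n x.
Proof.
move=> xn; rewrite next_nth mem_iota add0n xn.
case: n xn => // n xn.
have -> : index x (iota 0 n.+1) = x.
  have := @index_uniq _ 0 x (iota 0 n.+1); rewrite size_iota iota_uniq nth_iota //.
  by rewrite add0n => ->.
rewrite /= /nxt ltnS; case: ltnP => h; first by rewrite nth_iota.
by rewrite nth_default // size_iota.
Qed.

Lemma adjP (l : seq nat) x y :
  reflect (exists2 k, k.+1 < size l & nth 0 l k = x /\ nth 0 l k.+1 = y)
          (adj l x y).
Proof.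
elim: l => [|z l IH]; first by right; case.
rewrite adj_cons; apply: (iffP orP).
  case=> [/andP[/eqP<- ]|/IH[k kl [e1 e2]]].
    by case: l {IH} => //= w l /eqP[<-]; exists 0.
  by exists k.+1.
case=> [[|k]] /= kl [e1 e2].
  by left; case: l kl e2 {IH} => //= w l _ ->; rewrite e1 !eqxx.
by right; apply/IH; exists k.
Qed.


Definition lst n (s : 'S_n) : seq nat := [seq val (s t) | t <- enum 'I_n].

Lemma size_lst n (s : 'S_n) : size (lst s) = n.
Proof. by rewrite size_map size_enum_ord. Qed.

Lemma nth_lst n (s : 'S_n) (t : 'I_n) : nth 0 (lst s) t = s t.
Proof. by rewrite (nth_map t) ?size_enum_ord // nth_ord_enum. Qed.

Lemma contains_adj n (s : 'S_n) x y :
  contains_pattern s x.+1 y.+1 = adj (lst s) x y.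
Proof.
apply/existsP/adjP.
  case=> t /existsP[t' /and3P[/eqP e1 /eqP e2 /eqP e3]].
  exists t; first by rewrite size_lst -[t.+1]/(t.+2.-1) -e1 /= ltn_ord.
  have -> : t.+1 = t' by case: e1.
  by rewrite !nth_lst; case: e2; case: e3.
case=> k; rewrite size_lst => kl [e1 e2].
have kn : k < n by apply: ltnW.
exists (Ordinal kn); apply/existsP; exists (Ordinal kl).
rewrite /= eqxx /=.
have := nth_lst s (Ordinal kn); have := nth_lst s (Ordinal kl); rewrite /= => <- <-.
by rewrite e1 e2 !eqxx.
Qed.

Lemma avoids_lst n (s : 'S_n) :
  avoids_all s = [forall i : 'I_n, ~~ adj (lst s) i (nxt n i)].
Proof.
apply: eq_forallb => i.
have -> : (if i.+1 < n then i.+2 else 1) = (nxt n i).+1 by rewrite /nxt; case: ifP.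
by rewrite contains_adj.
Qed.

Lemma perm_lst n :
  perm_eq (map (@lst n) (enum {perm 'I_n})) (permutations (iota 0 n)).
Proof.
have ulst : forall s : 'S_n, uniq (lst s).
  move=> s; rewrite map_inj_uniq ?enum_uniq //.
  by move=> t1 t2 /val_inj /perm_inj.
have plst : forall s : 'S_n, perm_eq (lst s) (iota 0 n).
  move=> s; apply: (uniq_perm (ulst s) (iota_uniq _ _)) => x.
  rewrite mem_iota add0n; apply/mapP/idP.
    by case=> t _ ->; apply: ltn_ord.
  move=> xn; exists ((s^-1)%g (Ordinal xn)); first by rewrite mem_enum.
  by rewrite permKV.
have um : uniq (map (@lst n) (enum {perm 'I_n})).
  rewrite map_inj_uniq ?enum_uniq // => s1 s2 e.
  by apply/permP => t; apply: val_inj; rewrite /= -!nth_lst e.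
apply: (uniq_perm um (permutations_uniq _)).
have sub : {subset map (@lst n) (enum {perm 'I_n}) <= permutations (iota 0 n)}.
  by move=> l /mapP[s _ ->]; rewrite mem_permutations plst.
have [] := uniq_min_size um sub => //.
by rewrite size_permutations ?iota_uniq // size_iota size_map -cardT card_Sn.
Qed.

Lemma D_count n : D n =
  count (fun l : seq nat => [forall i : 'I_n, ~~ adj l (val i) (nxt n i)]) (permutations (iota 0 n)).
Proof.
rewrite -(seq.permP (perm_lst n)) count_map /D cardsE cardE /enum_mem size_filter (eq_filter (a2 := predT)) // filter_predT.
by apply: eq_count => s /=; rewrite -avoids_lst.
Qed.
Section RatLemmas.
Local Open Scope ring_scope.

Lemma sum_subsets (T : finType) (A : {set T}) (F : nat -> rat) :
  \sum_(X : {set T} | X \subset A) F #|X| = \sum_(k < #|A|.+1) F k *+ 'C(#|A|, k).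
Proof.
rewrite (partition_big (fun X : {set T} => (inord #|X| : 'I_(#|A|.+1))) predT) //=.
apply: eq_bigr => k _.
rewrite -cards_draws -sumr_const.
apply: eq_big => X.
  rewrite inE; case sXA: (X \subset A) => //=.
  rewrite -(inj_eq val_inj) /= inordK // ltnS.
  exact: subset_leq_card.
move=> /andP[sXA /eqP <-]; rewrite inordK // ltnS.
exact: subset_leq_card.
Qed.

Lemma sum_subsets_sign (T : finType) (A : {set T}) :
  \sum_(X : {set T} | X \subset A) (-1) ^+ #|X| = (A == set0)%:R :> rat.
Proof.
rewrite (sum_subsets A (fun k => (-1) ^+ k)).
have := exprDn (1 : rat) (-1) #|A|.
rewrite addrN expr0n cards_eq0 => ->.
by apply: eq_bigr => k _; rewrite expr1n mul1r.
Qed.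

Lemma count_sum (T : Type) (p : pred T) (L : seq T) (c : rat) :
  \sum_(l <- L) (if p l then c else 0) = c * (count p L)%:R.
Proof.
elim: L => [|x L IH]; first by rewrite big_nil mulr0.
by rewrite big_cons IH /= natrD mulrDr; case: (p x); rewrite ?mulr1 ?mulr0 ?add0r.
Qed.

Lemma final_arith (n : nat) : (1 <= n)%N ->
  \sum_(k < n.+1) ((-1) ^+ k * (if (val k == n)%N then 0%N else (n - k)`!)%:R) *+ 'C(n, k)
  = (n`!)%:R * \sum_(k < n.+1) (-1) ^+ k / (k`!)%:R + (-1) ^+ n.-1 :> rat.
Proof.
move=> hn.
rewrite big_ord_recr /= eqxx mulr0 mul0rn addr0.
rewrite big_ord_recr /= mulrDr -addrA.
have -> : (n`!)%:R * ((-1) ^+ n / (n`!)%:R) + (-1) ^+ n.-1 = 0 :> rat.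
  case: n hn => // m _ /=.
  rewrite exprS mulrCA mulfV ?mulr1 ?pnatr_eq0 -?lt0n ?fact_gt0 //.
  by rewrite mulN1r addNr.
rewrite addr0 mulr_sumr; apply: eq_bigr => k _.
have kn : (k < n)%N := ltn_ord k.
rewrite (ltn_eqF kn) -mulr_natr.
have := bin_fact (ltnW kn); move/(congr1 (fun m => m%:R : rat)).
rewrite !natrM => e.
have kf : (k`!)%:R != 0 :> rat by rewrite pnatr_eq0 -lt0n fact_gt0.
rewrite -e; field.
exact: kf.
Qed.

End RatLemmas.

Definition Sset n (l : seq nat) : {set 'I_n} := [set i : 'I_n | adj l i (nxt n i)].

Lemma cnt_X n (X : {set 'I_n}) : (1 <= n)%N ->
  count (fun l => X \subset Sset n l) (permutations (iota 0 n)) =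
  if #|X| == n then 0%N else (n - #|X|)`!.
Proof.
move=> hn.
have eqc : {in permutations (iota 0 n),
    (fun l => X \subset Sset n l) =1 good (iota 0 n) (map val (enum X))}.
  move=> l _; rewrite /good all_map; apply/subsetP/allP => H t.
    by rewrite mem_enum => tX; have := H t tX; rewrite inE /= next_iota.
  move=> tX; rewrite inE /= -next_iota //; apply: H; by rewrite mem_enum.
have [hX|hX] := eqVneq #|X| n.
  have XT : X = setT by apply/eqP; rewrite eqEcard subsetT cardsT card_ord hX leqnn.
  rewrite (eq_in_count (a2 := pred0)) ?count_pred0 // => l.
  rewrite mem_permutations => pl /=; apply/negbTE/negP => sub.
  have szl := perm_size pl; rewrite size_iota in szl.
  case: l pl sub szl => [|v l'] pl sub szl; first by move: hn; rewrite -szl.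
  have vn : (v < n)%N by have := mem_head v l'; rewrite (perm_mem pl) mem_iota add0n.
  pose u := if v == 0%N then n.-1 else v.-1.
  have un : (u < n)%N by rewrite /u; case: eqP => _; [rewrite prednK | apply: leq_ltn_trans vn; apply: leq_pred].
  have nu : nxt n u = v.
    rewrite /nxt /u; case: eqP => [->|v0]; first by rewrite prednK // ltnn.
    by rewrite prednK ?lt0n; [rewrite vn | apply/eqP].
  have := subsetP sub (Ordinal un); rewrite XT inE => /(_ isT); rewrite inE [val _]/= nu.
  move/adj_memr => /= vl'.
  by move: (perm_uniq pl); rewrite iota_uniq /= vl'.
rewrite (eq_in_count eqc) (core (erefl _)) ?iota_uniq ?size_iota ?size_map -?cardE //.
- by rewrite map_inj_uniq ?enum_uniq //; apply: val_inj.
- by move=> x /mapP[t _ ->]; rewrite mem_iota add0n ltn_ord.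
- by rewrite ltn_neqAle hX /= -[X in (_ <= X)%N]card_ord max_card.
Qed.

Local Open Scope ring_scope.

Theorem proposition2p4 (n : nat) (hn : (1 <= n)%N) :
  (D n)%:R = Der n + (-1) ^+ n.-1 :> rat.
Proof.
rewrite /Der -final_arith // D_count.
set L := permutations (iota 0 n).
rewrite (eq_count (a2 := fun l => Sset n l == set0)); last first.
  move=> l /=; apply/forallP/eqP => [H|H i].
    by apply/setP => i; rewrite !inE (negbTE (H i)).
  apply/negP => h; have : i \in Sset n l by rewrite inE.
  by rewrite H inE.
rewrite -[LHS]mul1r -count_sum.
rewrite (eq_bigr (fun l => \sum_(X : {set 'I_n} | X \subset Sset n l) (-1) ^+ #|X|));
  last by move=> l _; rewrite sum_subsets_sign; case: (Sset n l == set0).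
under eq_bigr do rewrite big_mkcond.
rewrite exchange_big /=.
under eq_bigr do rewrite count_sum cnt_X //.
rewrite (eq_bigl (fun X : {set 'I_n} => X \subset [set: 'I_n])); last first.
  by move=> X; rewrite subsetT.
rewrite (sum_subsets [set: 'I_n]
  (fun k => (-1) ^+ k * (if k == n then 0%N else (n - k)`!)%:R)).
by rewrite cardsT card_ord.
Qed.
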